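(* Let $m\in\{1,2\}$, $K>0$, $\gamma=3$, and let $(\rho,u)$ be a smooth solution ($\rho>0$, $r>0$) of the radially symmetric isentropic Euler equations $$(r^m\rho)_t+(r^m\rho u)_r=0,\qquad (r^m\rho u)_t+(r^m\rho u^2)_r+r^m p_r=0,\qquad p=K\rho^\gamma,$$ in the supersonic expanding regime $0<c_1<c_2$. Then: (i) If the 1-wave is rarefaction (R), the 2-wave can only change from compression (C) to rarefaction (R); if the 2-wave is rarefaction, the 1-wave can only change from C to R. (ii) If the 1-wave is compression (C), the 2-wave can only change from R to C; if the 2-wave is compression, the 1-wave can only change from R to C.
   Context: Here $h=\sqrt{K\gamma}\,\rho^{(\gamma-1)/2}$, $c_1=u-h$, $c_2=u+h$, and the gradient variables are $$\alpha=u_r+\tfrac{2}{\gamma-1}h_r+\tfrac{m}{r}\tfrac{hu}{c_2},\qquad \beta=u_r-\tfrac{2}{\gamma-1}h_r-\tfrac{m}{r}\tfrac{hu}{c_1}.$$ The solution is called 1-rarefaction (1-compression) at a point if $\beta>0$ ($\beta<0$) there, and 2-rarefaction (2-compression) if $\alpha>0$ ($\alpha<0$). Characteristic flow maps: $\partial_t\xi(r_0,t)=c_1(\xi(r_0,t),t)$, $\partial_t\psi(r_0,t)=c_2(\psi(r_0,t),t)$, $\xi(r_0,0)=\psi(r_0,0)=r_0$. ''The 2-wave changes from R to C'' means: there are $r_0$, $t^*$ and $\varepsilon>0$ such that, writing $g(t)=\alpha(\psi(r_0,t),t)$, we have $g(t^* )=0$, $g>0$ on $(t^*-\varepsilon,t^*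 )$ and $g<0$ on $(t^*,t^*+\varepsilon)$ (change from C to R: the reverse signs); the statement ''if the 1-wave is R then the 2-wave can only change from C to R'' means no R-to-C change of the 2-wave occurs at a time $t^*$ with $\beta(\psi(r_0,t^* ),t^* )>0$. The analogous statements for the 1-wave use $\beta$ along $\xi(r_0,\cdot)$, and with the roles of R/C (signs) of the other wave exchanged accordingly. *)

(* Defs.v *)
From Stdlib Require Import Reals Lra.
From Coquelicot Require Import Coquelicot.
Open Scope R_scope.

Definition partial_r (f : R -> R -> R) (r t : R) : R := Derive (fun x => f x t) r.
Definition partial_t (f : R -> R -> R) (r t : R) : R := Derive (fun s => f r s) t.

Definition open_rt (Om : R -> R -> Prop) : Prop :=
  forall r t, Om r t -> exists e, 0 < e /\
    forall r' t', Rabs (r' - r) < e -> Rabs (t' - t) < e -> Om r' t'.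

Definition cont_on (Om : R -> R -> Prop) (f : R -> R -> R) : Prop :=
  forall r t, Om r t -> continuous (fun p : R * R => f (fst p) (snd p)) (r, t).

Fixpoint Ck_on (n : nat) (Om : R -> R -> Prop) (f : R -> R -> R) : Prop :=
  match n with
  | O => cont_on Om f
  | S k => cont_on Om f /\
           (forall r t, Om r t -> ex_derive (fun x => f x t) r /\
                                  ex_derive (fun s => f r s) t) /\
           Ck_on k Om (partial_r f) /\ Ck_on k Om (partial_t f)
  end.

Definition smooth_on (Om : R -> R -> Prop) (f : R -> R -> R) : Prop :=
  forall n, Ck_on n Om f.

Definition pressure (K gamma : R) (rho : R -> R -> R) (r t : R) : R :=
  K * Rpower (rho r t) gamma.

Definition hh (K gamma : R) (rho : R -> R -> R) (r t : R) : R :=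
  sqrt (K * gamma) * Rpower (rho r t) ((gamma - 1) / 2).

Definition cc1 (K gamma : R) (rho u : R -> R -> R) (r t : R) : R :=
  u r t - hh K gamma rho r t.
Definition cc2 (K gamma : R) (rho u : R -> R -> R) (r t : R) : R :=
  u r t + hh K gamma rho r t.

Definition alpha (m : nat) (K gamma : R) (rho u : R -> R -> R) (r t : R) : R :=
  partial_r u r t + 2 / (gamma - 1) * partial_r (hh K gamma rho) r t
  + INR m / r * (hh K gamma rho r t * u r t / cc2 K gamma rho u r t).
Definition beta (m : nat) (K gamma : R) (rho u : R -> R -> R) (r t : R) : R :=
  partial_r u r t - 2 / (gamma - 1) * partial_r (hh K gamma rho) r t
  - INR m / r * (hh K gamma rho r t * u r t / cc1 K gamma rho u r t).

Definition radial_euler (m : nat) (K gamma : R) (rho u : R -> R -> R)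
    (Om : R -> R -> Prop) : Prop :=
  forall r t, Om r t ->
    partial_t (fun r t => r ^ m * rho r t) r t
      + partial_r (fun r t => r ^ m * rho r t * u r t) r t = 0 /\
    partial_t (fun r t => r ^ m * rho r t * u r t) r t
      + partial_r (fun r t => r ^ m * rho r t * (u r t) ^ 2) r t
      + r ^ m * partial_r (pressure K gamma rho) r t = 0.

Definition char_curve (Om : R -> R -> Prop) (c : R -> R -> R) (a b : R)
    (X : R -> R) : Prop :=
  forall t, a < t < b -> Om (X t) t /\ is_derive X t (c (X t) t).

(* The sign of g changes from + (R) to - (C) at ts. *)
Definition changes_R_to_C (g : R -> R) (ts : R) : Prop :=
  g ts = 0 /\ exists eps, 0 < eps /\
    (forall t, ts - eps < t < ts -> 0 < g t) /\
    (forall t, ts < t < ts + eps -> g t < 0).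

Definition changes_C_to_R (g : R -> R) (ts : R) : Prop :=
  g ts = 0 /\ exists eps, 0 < eps /\
    (forall t, ts - eps < t < ts -> g t < 0) /\
    (forall t, ts < t < ts + eps -> 0 < g t).

(* Main.v *)
Require Import Defs.
From Stdlib Require Import Reals Lra.
From Coquelicot Require Import Coquelicot.
Open Scope R_scope.

Lemma dplus (f g : R -> R) x df dg : is_derive f x df -> is_derive g x dg ->
  is_derive (fun t => f t + g t) x (df + dg).
Proof. intros; apply (is_derive_plus f g); auto. Qed.
Lemma dminus (f g : R -> R) x df dg : is_derive f x df -> is_derive g x dg ->
  is_derive (fun t => f t - g t) x (df - dg).
Proof. intros; apply (is_derive_minus f g); auto. Qed.
Lemma dmult (f g : R -> R) x df dg : is_derive f x df -> is_derive g x dg ->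
  is_derive (fun t => f t * g t) x (df * g x + f x * dg).
Proof. intros; apply (is_derive_mult f g); auto. intros; apply Rmult_comm. Qed.
Lemma dconst (c x : R) : is_derive (fun _ => c) x 0.
Proof. apply (is_derive_const c). Qed.
Lemma did (x : R) : is_derive (fun t => t) x 1.
Proof. apply (is_derive_id x). Qed.
Lemma deq (f : R -> R) x l l' : is_derive f x l -> l = l' -> is_derive f x l'.
Proof. intros H ->; exact H. Qed.

Lemma open_loc_r Om r t : open_rt Om -> Om r t -> locally r (fun x => Om x t).
Proof.
  intros HO H. destruct (HO r t H) as [e [He Hb]].
  exists (mkposreal e He). intros y Hy. apply Hb. exact Hy.
  rewrite Rminus_eq_0, Rabs_R0; exact He.
Qed.
Lemma open_loc_t Om r t : open_rt Om -> Om r t -> locally t (fun s => Om r s).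
Proof.
  intros HO H. destruct (HO r t H) as [e [He Hb]].
  exists (mkposreal e He). intros y Hy. apply Hb.
  rewrite Rminus_eq_0, Rabs_R0; exact He. exact Hy.
Qed.
Lemma open_loc_2d Om r t : open_rt Om -> Om r t -> locally_2d Om r t.
Proof.
  intros HO H. destruct (HO r t H) as [e [He Hb]].
  exists (mkposreal e He). intros; apply Hb; auto.
Qed.

Lemma smooth_r Om f : smooth_on Om f -> smooth_on Om (partial_r f).
Proof. intros H n. destruct (H (S n)) as [_ [_ [H1 _]]]. exact H1. Qed.
Lemma smooth_t Om f : smooth_on Om f -> smooth_on Om (partial_t f).
Proof. intros H n. destruct (H (S n)) as [_ [_ [_ H1]]]. exact H1. Qed.
Lemma smooth_cont Om f r t : smooth_on Om f -> Om r t -> continuity_2d_pt f r t.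
Proof. intros H Ht. apply continuity_2d_pt_filterlim. exact (H O r t Ht). Qed.
Lemma smooth_exr Om f r t : smooth_on Om f -> Om r t -> ex_derive (fun x => f x t) r.
Proof. intros H Ht. destruct (H 1%nat) as [_ [H1 _]]. apply H1; auto. Qed.
Lemma smooth_ext Om f r t : smooth_on Om f -> Om r t -> ex_derive (fun s => f r s) t.
Proof. intros H Ht. destruct (H 1%nat) as [_ [H1 _]]. apply H1; auto. Qed.
Lemma smooth_dr Om f r t : smooth_on Om f -> Om r t -> is_derive (fun x => f x t) r (partial_r f r t).
Proof. intros; apply Derive_correct; eapply smooth_exr; eauto. Qed.
Lemma smooth_dt Om f r t : smooth_on Om f -> Om r t -> is_derive (fun s => f r s) t (partial_t f r t).
Proof. intros; apply Derive_correct; eapply smooth_ext; eauto. Qed.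

Lemma chain Om f X t0 l : open_rt Om -> smooth_on Om f -> Om (X t0) t0 -> is_derive X t0 l ->
  is_derive (fun t => f (X t) t) t0 (partial_r f (X t0) t0 * l + partial_t f (X t0) t0).
Proof.
  intros HO Hs Hp HX.
  assert (D : differentiable_pt_lim f (X t0) t0 (partial_r f (X t0) t0) (partial_t f (X t0) t0)).
  { apply filterdiff_differentiable_pt_lim.
    eapply filterdiff_ext_lin.
    apply is_derive_filterdiff with (dfx := partial_r f).
    - apply (locally_2d_locally (fun u v => is_derive (fun z => f z v) u (partial_r f u v))).
      generalize (open_loc_2d _ _ _ HO Hp). apply locally_2d_impl.
      apply locally_2d_forall. intros u v Huv. eapply smooth_dr; eauto.
    - eapply smooth_dt; eauto.
    - exact (smooth_r _ _ Hs O _ _ Hp).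
    - intros y. reflexivity. }
  apply is_derive_Reals.
  replace (partial_r f (X t0) t0 * l + partial_t f (X t0) t0)
    with (partial_r f (X t0) t0 * l + partial_t f (X t0) t0 * 1) by ring.
  apply (derivable_pt_lim_comp_2d f X (fun t => t)); auto.
  apply is_derive_Reals; auto.
  apply derivable_pt_lim_id.
Qed.

Lemma schwarz_on Om f r t : open_rt Om -> smooth_on Om f -> Om r t ->
  partial_r (partial_t f) r t = partial_t (partial_r f) r t.
Proof.
  intros HO Hs Hp. unfold partial_r, partial_t.
  apply Schwarz.
  - generalize (open_loc_2d _ _ _ HO Hp). apply locally_2d_impl.
    apply locally_2d_forall. intros u v Huv. repeat split.
    eapply smooth_exr; eauto. eapply smooth_ext; eauto.
    exact (smooth_exr _ _ _ _ (smooth_t _ _ Hs) Huv).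
    exact (smooth_ext _ _ _ _ (smooth_r _ _ Hs) Huv).
  - exact (smooth_cont _ _ _ _ (smooth_r _ _ (smooth_t _ _ Hs)) Hp).
  - exact (smooth_cont _ _ _ _ (smooth_t _ _ (smooth_r _ _ Hs)) Hp).
Qed.

Lemma left_sign (g : R -> R) ts d : is_derive g ts d -> 0 < d -> g ts = 0 -> forall eps, 0 < eps ->
  exists t, ts - eps < t < ts /\ g t < 0.
Proof.
  intros Hd Hp H0 eps He. apply is_derive_Reals in Hd.
  destruct (Hd (d/2)) as [del Hdel]. lra.
  pose (h := - Rmin del eps / 2).
  assert (Hm1 : Rmin del eps <= del) by apply Rmin_l.
  assert (Hm2 : Rmin del eps <= eps) by apply Rmin_r.
  assert (Hm3 : 0 < Rmin del eps) by (apply Rmin_pos; [apply cond_pos|lra]).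
  assert (Hh : h < 0) by (unfold h; lra).
  specialize (Hdel h ltac:(lra)).
  rewrite Rabs_left in Hdel by lra.
  specialize (Hdel ltac:(unfold h; lra)).
  rewrite H0 in Hdel.
  exists (ts + h). split. unfold h; lra.
  change (Rabs ((g (ts + h) - 0) / h - d) < d / 2) in Hdel.
  set (q := (g (ts + h) - 0) / h) in Hdel.
  assert (Hq : g (ts + h) = q * h) by (unfold q; field; lra).
  apply Rabs_def2 in Hdel. rewrite Hq. nra.
Qed.

Lemma no_RC (g : R -> R) ts d : is_derive g ts d -> 0 < d -> ~ changes_R_to_C g ts.
Proof.
  intros Hd Hp [H0 [eps [He [Hl _]]]].
  destruct (left_sign g ts d Hd Hp H0 eps He) as [t [Ht Hg]].
  specialize (Hl t Ht). lra.
Qed.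

Lemma no_CR (g : R -> R) ts d : is_derive g ts d -> d < 0 -> ~ changes_C_to_R g ts.
Proof.
  intros Hd Hp [H0 [eps [He [Hl _]]]].
  assert (Hd' : is_derive (fun t => - g t) ts (- d)) by (apply (is_derive_opp g); auto).
  destruct (left_sign _ ts (-d) Hd' ltac:(lra) ltac:(cbv beta; rewrite H0; ring) eps He) as [t [Ht Hg]].
  specialize (Hl t Ht). lra.
Qed.

Lemma mass_pt m' K rho u Om r t : smooth_on Om rho -> smooth_on Om u ->
  (forall r t, Om r t -> 0 < r) -> radial_euler (S m') K 3 rho u Om -> Om r t ->
  partial_t rho r t = -(u r t * partial_r rho r t + rho r t * partial_r u r t
                        + INR (S m') * rho r t * u r t / r).
Proof.
  intros Hsr Hsu Hr HE H.
  destruct (HE r t H) as [E1 _].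
  assert (D1 : partial_t (fun r t => r^(S m') * rho r t) r t = r^(S m') * partial_t rho r t)
    by (unfold partial_t; apply Derive_scal).
  assert (D2 : partial_r (fun r t => r^(S m') * rho r t * u r t) r t =
     (INR (S m') * 1 * r^m' * rho r t + r^(S m') * partial_r rho r t) * u r t
     + r^(S m') * rho r t * partial_r u r t).
  { unfold partial_r at 1. apply is_derive_unique.
    eapply deq. apply dmult. apply dmult. apply is_derive_pow, did.
    eapply smooth_dr; eauto. eapply smooth_dr; eauto. reflexivity. }
  rewrite D1, D2 in E1. cbn [pow] in E1.
  assert (Hr0 := Hr r t H).
  assert (Hp : 0 < r ^ m') by (apply pow_lt; auto).
  match type of E1 with ?L = 0 =>
    assert (HH : r * r^m' * (partial_t rho r t - -(u r t * partial_r rho r t + rho r t * partial_r u r t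
                        + INR (S m') * rho r t * u r t / r)) = L) by (field; lra) end.
  rewrite E1 in HH. apply Rmult_integral in HH. destruct HH as [HH|HH]; [nra|lra].
Qed.

Lemma press_r K rho Om r t : open_rt Om -> smooth_on Om rho -> (forall r t, Om r t -> 0 < rho r t) ->
  Om r t -> partial_r (pressure K 3 rho) r t = K * (3 * rho r t ^ 2 * partial_r rho r t).
Proof.
  intros HO Hsr Hrho H. unfold partial_r.
  rewrite (Derive_ext_loc _ (fun x => K * (rho x t ^ 3))).
  - apply is_derive_unique. eapply deq. apply is_derive_scal. apply is_derive_pow.
    eapply smooth_dr; eauto. unfold partial_r; simpl; ring.
  - generalize (open_loc_r _ _ _ HO H). apply filter_imp. intros x Hx.
    unfold pressure. rewrite <- Rpower_pow by auto. replace (INR 3) with 3 by (simpl; ring). reflexivity.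
Qed.

Lemma mom_pt m' K rho u Om r t : open_rt Om -> smooth_on Om rho -> smooth_on Om u ->
  (forall r t, Om r t -> 0 < r) -> (forall r t, Om r t -> 0 < rho r t) ->
  radial_euler (S m') K 3 rho u Om -> Om r t ->
  partial_t u r t = -(u r t * partial_r u r t + K * 3 * rho r t * partial_r rho r t).
Proof.
  intros HO Hsr Hsu Hr Hrho HE H.
  assert (HM := mass_pt m' K rho u Om r t Hsr Hsu Hr HE H).
  destruct (HE r t H) as [_ E2].
  assert (D1 : partial_t (fun r t => r^(S m') * rho r t * u r t) r t =
      r^(S m') * partial_t rho r t * u r t + r^(S m') * rho r t * partial_t u r t).
  { unfold partial_t at 1. apply is_derive_unique.
    eapply deq. apply dmult. apply is_derive_scal.
    eapply smooth_dt; eauto. eapply smooth_dt; eauto. reflexivity. }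
  assert (D2 : partial_r (fun r t => r^(S m') * rho r t * (u r t)^2) r t =
     (INR (S m') * 1 * r^m' * rho r t + r^(S m') * partial_r rho r t) * (u r t)^2
     + r^(S m') * rho r t * (2 * partial_r u r t * u r t)).
  { unfold partial_r at 1. apply is_derive_unique.
    eapply deq. apply dmult. apply dmult. apply is_derive_pow, did.
    eapply smooth_dr; eauto. apply is_derive_pow. eapply smooth_dr; eauto. simpl; ring. }
  rewrite D1, D2, (press_r K rho Om r t HO Hsr Hrho H) in E2. rewrite HM in E2. cbn [pow] in E2.
  assert (Hr0 := Hr r t H). assert (Hq := Hrho r t H).
  assert (Hp : 0 < r ^ m') by (apply pow_lt; auto).
  match type of E2 with ?L = 0 =>
    assert (HH : r * r^m' * rho r t * (partial_t u r t - -(u r t * partial_r u r t + K * 3 * rho r t * partial_r rho r t)) = L) by (field; lra) end.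
  rewrite E2 in HH. apply Rmult_integral in HH. destruct HH as [HH|HH]; [|lra].
  apply Rmult_integral in HH. destruct HH; nra.
Qed.
Lemma alg (sg m x s P U Pr Ur Prr Urr Pt Ut Prt Urt : R) :
  sg = 1 \/ sg = -1 ->
  x <> 0 -> U + s*P <> 0 -> U - s*P <> 0 ->
  Pt = -(U*Pr + P*Ur + m*P*U/x) ->
  Ut = -(U*Ur + s*s*P*Pr) ->
  Prt = -(Ur*Pr + U*Prr + Pr*Ur + P*Urr + m*((Pr*U + P*Ur)/x - P*U/x^2)) ->
  Urt = -(Ur*Ur + U*Urr + s*s*(Pr*Pr + P*Prr)) ->
  Ur + sg*(s*Pr + m/x*(s*P*U/(U+sg*s*P))) = 0 ->
  let c := U + sg*s*P in
  let P' := Pr*c + Pt in let U' := Ur*c + Ut in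
  let Q := s*P*U/c in
  let Q' := ((s*(P'*U + P*U'))*c - s*P*U*(U' + sg*s*P'))/c^2 in
  (Urr*c + Urt) + sg*(s*(Prr*c + Prt) + (m*(-c/x^2)*Q + m/x*Q'))
  = m*(U - sg*s*P)^2 * (Ur - sg*(s*Pr + m/x*(s*P*U/(U - sg*s*P)))) / (2*x*c).
Proof.
  intros Hsg Hx Hp Hm HPt HUt HPrt HUrt HA c P' U' Q Q'.
  unfold Q', Q, U', P', c; clear Q' Q U' P' c.
  subst Pt Ut Prt Urt.
  destruct Hsg as [-> | ->].
  - assert (HUr : Ur = -(s*Pr + m/x*(s*P*U/(U+1*s*P)))) by lra.
    subst Ur. field. repeat split; auto; lra.
  - assert (HUr : Ur = (s*Pr + m/x*(s*P*U/(U+ -1*s*P)))) by lra.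
    subst Ur. field. repeat split; auto; lra.
Qed.

Ltac req := cbv beta; match goal with |- ?a = ?b => change (@eq R a b) end.

Lemma dopp (f : R -> R) x df : is_derive f x df -> is_derive (fun t => - f t) x (- df).
Proof. intros; apply (is_derive_opp f); auto. Qed.

Lemma mass_r m' K rho u Om r t : open_rt Om -> smooth_on Om rho -> smooth_on Om u ->
  (forall r t, Om r t -> 0 < r) -> radial_euler (S m') K 3 rho u Om -> Om r t ->
  partial_r (partial_t rho) r t =
   -(partial_r u r t * partial_r rho r t + u r t * partial_r (partial_r rho) r t
     + partial_r rho r t * partial_r u r t + rho r t * partial_r (partial_r u) r t
     + INR (S m') * ((partial_r rho r t * u r t + rho r t * partial_r u r t) / r
                     - rho r t * u r t / r^2)).
Proof.
  intros HO Hsr Hsu Hr HE H. assert (Hr0 := Hr r t H).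
  unfold partial_r at 1.
  rewrite (Derive_ext_loc _ (fun x => -(u x t * partial_r rho x t + rho x t * partial_r u x t
                        + INR (S m') * rho x t * u x t / x))).
  - apply is_derive_unique. eapply deq.
    apply dopp. apply dplus. apply dplus. apply dmult. eapply smooth_dr; eauto.
    eapply smooth_dr; eauto using smooth_r.
    apply dmult. eapply smooth_dr; eauto. eapply smooth_dr; eauto using smooth_r.
    apply is_derive_div. apply dmult. apply is_derive_scal. eapply smooth_dr; eauto.
    eapply smooth_dr; eauto. apply did. lra.
    req. field. lra.
  - generalize (open_loc_r _ _ _ HO H). apply filter_imp. intros x Hx.
    eapply mass_pt; eauto.
Qed.

Lemma mom_r m' K rho u Om r t : open_rt Om -> smooth_on Om rho -> smooth_on Om u ->
  (forall r t, Om r t -> 0 < r) -> (forall r t, Om r t -> 0 < rho r t) ->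
  radial_euler (S m') K 3 rho u Om -> Om r t ->
  partial_r (partial_t u) r t =
   -(partial_r u r t * partial_r u r t + u r t * partial_r (partial_r u) r t
     + K * 3 * (partial_r rho r t * partial_r rho r t + rho r t * partial_r (partial_r rho) r t)).
Proof.
  intros HO Hsr Hsu Hr Hrho HE H.
  unfold partial_r at 1.
  rewrite (Derive_ext_loc _ (fun x => -(u x t * partial_r u x t + K * 3 * rho x t * partial_r rho x t))).
  - apply is_derive_unique. eapply deq.
    apply dopp. apply dplus. apply dmult. eapply smooth_dr; eauto.
    eapply smooth_dr; eauto using smooth_r.
    apply dmult. apply is_derive_scal. eapply smooth_dr; eauto. eapply smooth_dr; eauto using smooth_r.
    req. ring.
  - generalize (open_loc_r _ _ _ HO H). apply filter_imp. intros x Hx.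
    eapply mom_pt; eauto.
Qed.

Lemma curve_key m' K rho u Om sg (X : R -> R) ts :
  sg = 1 \/ sg = -1 -> 0 < K -> open_rt Om -> (forall r t, Om r t -> 0 < r) ->
  smooth_on Om rho -> smooth_on Om u -> (forall r t, Om r t -> 0 < rho r t) ->
  radial_euler (S m') K 3 rho u Om ->
  locally ts (fun t => Om (X t) t) ->
  is_derive X ts (u (X ts) ts + sg * sqrt (K*3) * rho (X ts) ts) ->
  u (X ts) ts + sqrt (K*3) * rho (X ts) ts <> 0 ->
  u (X ts) ts - sqrt (K*3) * rho (X ts) ts <> 0 ->
  partial_r u (X ts) ts + sg * (sqrt (K*3) * partial_r rho (X ts) ts + INR (S m') / X ts *
     (sqrt (K*3) * rho (X ts) ts * u (X ts) ts / (u (X ts) ts + sg * sqrt (K*3) * rho (X ts) ts))) = 0 ->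
  is_derive (fun t => partial_r u (X t) t + sg * (sqrt (K*3) * partial_r rho (X t) t + INR (S m') / X t *
     (sqrt (K*3) * rho (X t) t * u (X t) t / (u (X t) t + sg * sqrt (K*3) * rho (X t) t)))) ts
   (INR (S m') * (u (X ts) ts - sg * sqrt (K*3) * rho (X ts) ts)^2 *
     (partial_r u (X ts) ts - sg * (sqrt (K*3) * partial_r rho (X ts) ts + INR (S m') / X ts *
       (sqrt (K*3) * rho (X ts) ts * u (X ts) ts / (u (X ts) ts - sg * sqrt (K*3) * rho (X ts) ts))))
     / (2 * X ts * (u (X ts) ts + sg * sqrt (K*3) * rho (X ts) ts))).
Proof.
  intros Hsg HK HO Hr Hsr Hsu Hrho HE Hloc HX Hp Hm HA.
  assert (Hpt : Om (X ts) ts) by (apply locally_singleton in Hloc; exact Hloc).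
  assert (Hx0 : X ts <> 0) by (specialize (Hr _ _ Hpt); lra).
  assert (Hss : sqrt (K*3) * sqrt (K*3) = K*3) by (apply sqrt_sqrt; lra).
  assert (Hc : u (X ts) ts + sg * sqrt (K*3) * rho (X ts) ts <> 0)
    by (destruct Hsg as [-> | ->]; lra).
  assert (dU := chain Om u X ts _ HO Hsu Hpt HX).
  assert (dP := chain Om rho X ts _ HO Hsr Hpt HX).
  assert (dUr := chain Om (partial_r u) X ts _ HO (smooth_r _ _ Hsu) Hpt HX).
  assert (dPr := chain Om (partial_r rho) X ts _ HO (smooth_r _ _ Hsr) Hpt HX).
  eapply deq.
  { apply dplus. exact dUr. apply is_derive_scal. apply dplus. apply is_derive_scal. exact dPr.
    apply dmult. apply is_derive_div. apply dconst. exact HX. exact Hx0.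
    apply is_derive_div. apply dmult. apply is_derive_scal. exact dP. exact dU.
    apply dplus. exact dU. apply is_derive_scal. exact dP. exact Hc. }
  req.
  assert (Halg := alg sg (INR (S m')) (X ts) (sqrt (K*3)) (rho (X ts) ts) (u (X ts) ts)
     (partial_r rho (X ts) ts) (partial_r u (X ts) ts)
     (partial_r (partial_r rho) (X ts) ts) (partial_r (partial_r u) (X ts) ts)
     (partial_t rho (X ts) ts) (partial_t u (X ts) ts)
     (partial_t (partial_r rho) (X ts) ts) (partial_t (partial_r u) (X ts) ts)
     Hsg Hx0 Hp Hm).
  cbv zeta in Halg. rewrite <- Halg; clear Halg.
  - field. auto.
  - eapply mass_pt; eauto.
  - rewrite Hss. eapply mom_pt; eauto.
  - rewrite <- (schwarz_on Om rho) by auto. eapply mass_r; eauto.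
  - rewrite <- (schwarz_on Om u) by auto. rewrite Hss. eapply mom_r; eauto.
  - exact HA.
Qed.

Lemma loc_of_char Om c a b (X : R -> R) ts : char_curve Om c a b X -> a < ts < b ->
  locally ts (fun t => Om (X t) t).
Proof.
  intros H Hab.
  assert (He : 0 < Rmin (ts - a) (b - ts)) by (apply Rmin_pos; lra).
  exists (mkposreal _ He). intros y Hy.
  change (Rabs (y - ts) < Rmin (ts - a) (b - ts)) in Hy.
  assert (H1 := Rmin_l (ts - a) (b - ts)). assert (H2 := Rmin_r (ts - a) (b - ts)).
  apply Rabs_def2 in Hy. apply H. lra.
Qed.

Lemma hh_eq K rho r t : 0 < rho r t -> hh K 3 rho r t = sqrt (K*3) * rho r t.
Proof.
  intros H. unfold hh. replace ((3-1)/2) with 1 by field. rewrite Rpower_1 by auto.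
  replace (K*3) with (K*3) by ring. reflexivity.
Qed.

Lemma hh_r K rho Om r t : open_rt Om -> (forall r t, Om r t -> 0 < rho r t) -> Om r t ->
  partial_r (hh K 3 rho) r t = sqrt (K*3) * partial_r rho r t.
Proof.
  intros HO Hrho H. unfold partial_r.
  rewrite (Derive_ext_loc _ (fun x => sqrt (K*3) * rho x t)).
  apply Derive_scal.
  generalize (open_loc_r _ _ _ HO H). apply filter_imp. intros x Hx.
  apply hh_eq; auto.
Qed.

Lemma alpha_eq m' K rho u Om r t : open_rt Om -> (forall r t, Om r t -> 0 < r) ->
  (forall r t, Om r t -> 0 < rho r t) ->
  (forall r t, Om r t -> 0 < cc1 K 3 rho u r t /\ cc1 K 3 rho u r t < cc2 K 3 rho u r t) ->
  Om r t ->
  alpha (S m') K 3 rho u r t = partial_r u r t + 1 * (sqrt (K*3) * partial_r rho r t + INR (S m') / r *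
     (sqrt (K*3) * rho r t * u r t / (u r t + 1 * sqrt (K*3) * rho r t))).
Proof.
  intros HO Hr Hrho Hsup H. assert (Hr0 := Hr r t H). destruct (Hsup r t H) as [H1 H2].
  unfold cc1, cc2 in *. rewrite hh_eq in * by auto.
  unfold alpha, cc2. rewrite hh_eq by auto. rewrite (hh_r K rho Om) by auto.
  field. lra.
Qed.

Lemma beta_eq m' K rho u Om r t : open_rt Om -> (forall r t, Om r t -> 0 < r) ->
  (forall r t, Om r t -> 0 < rho r t) ->
  (forall r t, Om r t -> 0 < cc1 K 3 rho u r t /\ cc1 K 3 rho u r t < cc2 K 3 rho u r t) ->
  Om r t ->
  beta (S m') K 3 rho u r t = partial_r u r t + -1 * (sqrt (K*3) * partial_r rho r t + INR (S m') / r *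
     (sqrt (K*3) * rho r t * u r t / (u r t + -1 * sqrt (K*3) * rho r t))).
Proof.
  intros HO Hr Hrho Hsup H. assert (Hr0 := Hr r t H). destruct (Hsup r t H) as [H1 H2].
  unfold cc1, cc2 in *. rewrite hh_eq in * by auto.
  unfold beta, cc1. rewrite hh_eq by auto. rewrite (hh_r K rho Om) by auto.
  field. lra.
Qed.

Lemma key_alpha m' K rho u Om a b (X : R -> R) ts : 0 < K -> open_rt Om ->
  (forall r t, Om r t -> 0 < r) -> smooth_on Om rho -> smooth_on Om u ->
  (forall r t, Om r t -> 0 < rho r t) -> radial_euler (S m') K 3 rho u Om ->
  (forall r t, Om r t -> 0 < cc1 K 3 rho u r t /\ cc1 K 3 rho u r t < cc2 K 3 rho u r t) ->
  char_curve Om (cc2 K 3 rho u) a b X -> a < ts < b ->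
  alpha (S m') K 3 rho u (X ts) ts = 0 ->
  is_derive (fun t => alpha (S m') K 3 rho u (X t) t) ts
    (INR (S m') * (cc1 K 3 rho u (X ts) ts)^2 * beta (S m') K 3 rho u (X ts) ts
      / (2 * X ts * cc2 K 3 rho u (X ts) ts)).
Proof.
  intros HK HO Hr Hsr Hsu Hrho HE Hsup Hch Hab HA.
  assert (Hloc := loc_of_char _ _ _ _ _ _ Hch Hab).
  assert (Hpt : Om (X ts) ts) by (apply (Hch ts Hab)).
  assert (Hr0 := Hr _ _ Hpt). assert (Hq := Hrho _ _ Hpt).
  destruct (Hsup _ _ Hpt) as [H1 H2].
  assert (H1' := H1). assert (H2' := H2).
  unfold cc1, cc2 in H1', H2'. rewrite hh_eq in H1', H2' by auto.
  assert (HX : is_derive X ts (u (X ts) ts + 1 * sqrt (K*3) * rho (X ts) ts)).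
  { eapply deq. apply (Hch ts Hab). unfold cc2. rewrite hh_eq by auto. req. ring. }
  eapply is_derive_ext_loc; cycle 1.
  { eapply deq. apply (curve_key m' K rho u Om 1 X ts); auto; try lra.
    rewrite <- (alpha_eq m' K rho u Om) by auto. exact HA.
    rewrite (beta_eq m' K rho u Om) by auto. unfold cc1, cc2. rewrite hh_eq by auto.
    req. field. lra. }
  generalize Hloc. apply filter_imp. intros t Ht. cbv beta.
  rewrite (alpha_eq m' K rho u Om) by auto. reflexivity.
Qed.

Lemma key_beta m' K rho u Om a b (X : R -> R) ts : 0 < K -> open_rt Om ->
  (forall r t, Om r t -> 0 < r) -> smooth_on Om rho -> smooth_on Om u ->
  (forall r t, Om r t -> 0 < rho r t) -> radial_euler (S m') K 3 rho u Om ->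
  (forall r t, Om r t -> 0 < cc1 K 3 rho u r t /\ cc1 K 3 rho u r t < cc2 K 3 rho u r t) ->
  char_curve Om (cc1 K 3 rho u) a b X -> a < ts < b ->
  beta (S m') K 3 rho u (X ts) ts = 0 ->
  is_derive (fun t => beta (S m') K 3 rho u (X t) t) ts
    (INR (S m') * (cc2 K 3 rho u (X ts) ts)^2 * alpha (S m') K 3 rho u (X ts) ts
      / (2 * X ts * cc1 K 3 rho u (X ts) ts)).
Proof.
  intros HK HO Hr Hsr Hsu Hrho HE Hsup Hch Hab HA.
  assert (Hloc := loc_of_char _ _ _ _ _ _ Hch Hab).
  assert (Hpt : Om (X ts) ts) by (apply (Hch ts Hab)).
  assert (Hr0 := Hr _ _ Hpt). assert (Hq := Hrho _ _ Hpt).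
  destruct (Hsup _ _ Hpt) as [H1 H2].
  assert (H1' := H1). assert (H2' := H2).
  unfold cc1, cc2 in H1', H2'. rewrite hh_eq in H1', H2' by auto.
  assert (HX : is_derive X ts (u (X ts) ts + -1 * sqrt (K*3) * rho (X ts) ts)).
  { eapply deq. apply (Hch ts Hab). unfold cc1. rewrite hh_eq by auto. req. ring. }
  eapply is_derive_ext_loc; cycle 1.
  { eapply deq. apply (curve_key m' K rho u Om (-1) X ts); auto; try lra.
    rewrite <- (beta_eq m' K rho u Om) by auto. exact HA.
    rewrite (alpha_eq m' K rho u Om) by auto. unfold cc1, cc2. rewrite hh_eq by auto.
    req. field. lra. }
  generalize Hloc. apply filter_imp. intros t Ht. cbv beta.
  rewrite (beta_eq m' K rho u Om) by auto. reflexivity.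
Qed.

Lemma pos_frac a q x c bt : 0 < a -> 0 < q -> 0 < x -> 0 < c -> 0 < bt -> 0 < a * q^2 * bt / (2*x*c).
Proof. intros. unfold Rdiv. apply Rmult_lt_0_compat.
  apply Rmult_lt_0_compat; [apply Rmult_lt_0_compat; [auto| apply pow_lt; auto] | auto].
  apply Rinv_0_lt_compat. nra. Qed.
Lemma neg_frac a q x c bt : 0 < a -> 0 < q -> 0 < x -> 0 < c -> bt < 0 -> a * q^2 * bt / (2*x*c) < 0.
Proof. intros. assert (0 < a * q^2 * (-bt) / (2*x*c)) by (apply pos_frac; lra).
  unfold Rdiv in *. nra. Qed.

Lemma main_gen m' K rho u Om :
    0 < K -> open_rt Om -> (forall r t, Om r t -> 0 < r) ->
    smooth_on Om rho -> smooth_on Om u -> (forall r t, Om r t -> 0 < rho r t) ->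
    radial_euler (S m') K 3 rho u Om ->
    (forall r t, Om r t ->
       0 < cc1 K 3 rho u r t /\ cc1 K 3 rho u r t < cc2 K 3 rho u r t) ->
    let al := alpha (S m') K 3 rho u in
    let be := beta (S m') K 3 rho u in
    (forall a b X ts, char_curve Om (cc2 K 3 rho u) a b X -> a < ts < b ->
       0 < be (X ts) ts -> ~ changes_R_to_C (fun t => al (X t) t) ts) /\
    (forall a b X ts, char_curve Om (cc1 K 3 rho u) a b X -> a < ts < b ->
       0 < al (X ts) ts -> ~ changes_R_to_C (fun t => be (X t) t) ts) /\
    (forall a b X ts, char_curve Om (cc2 K 3 rho u) a b X -> a < ts < b ->
       be (X ts) ts < 0 -> ~ changes_C_to_R (fun t => al (X t) t) ts) /\
    (forall a b X ts, char_curve Om (cc1 K 3 rho u) a b X -> a < ts < b ->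
       al (X ts) ts < 0 -> ~ changes_C_to_R (fun t => be (X t) t) ts).
Proof.
  intros HK HO Hr Hsr Hsu Hrho HE Hsup al be.
  assert (Hm : 0 < INR (S m')) by apply lt_0_INR, Nat.lt_0_succ.
  repeat split; intros a b X ts Hch Hab Hs Hc;
  assert (Hpt : Om (X ts) ts) by (apply (Hch ts Hab));
  destruct (Hsup _ _ Hpt) as [H1 H2]; assert (Hr0 := Hr _ _ Hpt);
  assert (H0 := proj1 Hc); cbv beta in H0.
  - eapply no_RC; [ | | exact Hc]. eapply key_alpha; eauto. apply pos_frac; auto; lra.
  - eapply no_RC; [ | | exact Hc]. eapply key_beta; eauto. apply pos_frac; auto; lra.
  - eapply no_CR; [ | | exact Hc]. eapply key_alpha; eauto. apply neg_frac; auto; lra.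
  - eapply no_CR; [ | | exact Hc]. eapply key_beta; eauto. apply neg_frac; auto; lra.
Qed.

Theorem mainTheorem2 :
  forall (m : nat) (K : R) (rho u : R -> R -> R) (Om : R -> R -> Prop),
    (m = 1%nat \/ m = 2%nat) ->
    0 < K ->
    open_rt Om ->
    (forall r t, Om r t -> 0 < r) ->
    smooth_on Om rho ->
    smooth_on Om u ->
    (forall r t, Om r t -> 0 < rho r t) ->
    radial_euler m K 3 rho u Om ->
    (forall r t, Om r t ->
       0 < cc1 K 3 rho u r t /\ cc1 K 3 rho u r t < cc2 K 3 rho u r t) ->
    let al := alpha m K 3 rho u in
    let be := beta m K 3 rho u in
    (* (i) 1-wave R: the 2-wave cannot change from R to C *)
    (forall a b X ts, char_curve Om (cc2 K 3 rho u) a b X -> a < ts < b ->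
       0 < be (X ts) ts -> ~ changes_R_to_C (fun t => al (X t) t) ts) /\
    (* (i) 2-wave R: the 1-wave cannot change from R to C *)
    (forall a b X ts, char_curve Om (cc1 K 3 rho u) a b X -> a < ts < b ->
       0 < al (X ts) ts -> ~ changes_R_to_C (fun t => be (X t) t) ts) /\
    (* (ii) 1-wave C: the 2-wave cannot change from C to R *)
    (forall a b X ts, char_curve Om (cc2 K 3 rho u) a b X -> a < ts < b ->
       be (X ts) ts < 0 -> ~ changes_C_to_R (fun t => al (X t) t) ts) /\
    (* (ii) 2-wave C: the 1-wave cannot change from C to R *)
    (forall a b X ts, char_curve Om (cc1 K 3 rho u) a b X -> a < ts < b ->
       al (X ts) ts < 0 -> ~ changes_C_to_R (fun t => be (X t) t) ts).
Proof.
  intros m K rho u Om Hm. destruct Hm as [-> | ->]; intros; apply main_gen; auto.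
Qed.
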